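(* Let $q > 5$ be a Sophie Germain prime with $z(2q+1) \mid \pi(q)$. Then $q \equiv 8 \pmod{15}$.
   Context: A Sophie Germain prime is a prime $q$ with $2q+1$ prime. $F_n$ denotes the $n$-th Fibonacci number ($F_0=0$, $F_1=1$). For a prime $p$, $z(p)$ is the least positive integer $k$ with $p \mid F_k$. $\pi(n)$ is the Pisano period, the least period of $(F_m \bmod n)_{m\ge0}$. *)

(* Defs.v *)
From mathcomp Require Import all_boot.
Set Implicit Arguments. Unset Strict Implicit. Unset Printing Implicit Defensive.

Fixpoint fib (n : nat) : nat :=
  match n with
  | 0 => 0
  | 1 => 1
  | (m.+1 as k).+1 => fib k + fib m
  end.

Definition sophie_germain (q : nat) : Prop := prime q /\ prime (2 * q + 1).

Definition is_rank_app (p k : nat) : Prop :=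
  0 < k /\ p %| fib k /\ (forall j, 0 < j -> j < k -> ~~ (p %| fib j)).

Definition fib_period (n k : nat) : Prop :=
  forall m, fib (m + k) %% n = fib m %% n.

Definition is_pisano (n k : nat) : Prop :=
  0 < k /\ fib_period n k /\ (forall j, 0 < j -> j < k -> ~ fib_period n j).

(* Main.v *)
Require Import Defs.
From mathcomp Require Import all_boot all_algebra all_fingroup all_solvable all_field.
From mathcomp Require Import ring.
Import GRing.Theory.
Local Open Scope ring_scope.

Section FieldPart.
Variables (F : fieldType) (r : nat) (chR : r \in [pchar F]) (z : F).
Hypotheses (z5 : z ^+ 5 = 1) (z1 : z != 1) (r2 : r != 2%N).

Lemma zsum : 1 + z + z^+2 + z^+3 + z^+4 = 0.
Proof.
have : (z - 1) * (1 + z + z^+2 + z^+3 + z^+4) = 0.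
  have -> : (z - 1) * (1 + z + z^+2 + z^+3 + z^+4) = z^+5 - 1 by ring.
  by rewrite z5 subrr.
by move/eqP; rewrite mulf_eq0 subr_eq0 (negPf z1) /= => /eqP.
Qed.

Definition s := 1 + 2 * z + 2 * z ^+ 4.

Lemma s2 : s ^+ 2 = 5.
Proof.
have -> : s ^+ 2 = 5 + 4 * (1 + z + z^+2 + z^+3 + z^+4) + (8 + 4 * z^+3) * (z^+5 - 1)
  by rewrite /s; ring.
by rewrite zsum z5 subrr !mulr0 !addr0.
Qed.

Lemma two_neq0 : (2%:R : F) != 0.
Proof.
rewrite -(dvdn_pcharf chR); apply/negP => /(dvdn_leq (isT : (0 < 2)%N)) hle.
have := prime_gt1 (pcharf_prime chR); move: r2 hle; case: (r) => [|[|[|]]] //.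
Qed.

Hypothesis r5 : r != 5%N.
Lemma s_neq0 : s != 0.
Proof.
apply/negP => /eqP s0; have := s2; rewrite s0 expr0n /= => /eqP.
rewrite eq_sym -(dvdn_pcharf chR) (dvdn_prime2 (pcharf_prime chR)) //.
by rewrite (negPf r5).
Qed.


Lemma zr : z ^+ r = z ^+ (r %% 5).
Proof. by rewrite {1}(divn_eq r 5) exprD mulnC exprM z5 expr1n mul1r. Qed.

Lemma frobD (x y : F) : (x + y) ^+ r = x ^+ r + y ^+ r.
Proof. by rewrite -!(pFrobenius_autE chR) rmorphD. Qed.
Lemma frobM (x y : F) : (x * y) ^+ r = x ^+ r * y ^+ r.
Proof. by rewrite exprMn. Qed.
Lemma frobN (x : F) : (- x) ^+ r = - x ^+ r.
Proof. by rewrite -!(pFrobenius_autE chR) rmorphN. Qed.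
Lemma frob_nat n : (n%:R : F) ^+ r = n%:R.
Proof. by rewrite -!(pFrobenius_autE chR) rmorph_nat. Qed.

Lemma sr : ((r %% 5 == 1)%N || (r %% 5 == 4)%N -> s ^+ r = s ^+ 1) /\
  ((r %% 5 == 2)%N || (r %% 5 == 3)%N -> s ^+ r = - s).
Proof.
have e : s ^+ r = 1 + 2 * z ^+ r + 2 * (z ^+ r) ^+ 4.
  rewrite /s !frobD !frobM expr1n (frob_nat 2); ring.
rewrite zr in e.
have hz : forall k, z ^+ (k + 5) = z ^+ k by move=> k; rewrite exprD z5 mulr1.
have ltr : (r %% 5 < 5)%N by rewrite ltn_mod.
have r0 : (r %% 5 != 0)%N.
  apply/negP => /eqP h; move: r5; rewrite eq_sym -dvdn_prime2 ?/dvdn ?h //.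
  exact: pcharf_prime chR.
have S2 : 1 + 2 * z + 2 * z ^+ 4 + (1 + 2 * z ^+ 2 + 2 * z ^+ 3) = 0.
  transitivity (2 * (1 + z + z^+2 + z^+3 + z^+4)); first by ring.
  by rewrite zsum mulr0.
move: e ltr r0; case: (r %% 5)%N => [|[|[|[|[|k]]]]] e ltr r0 //.
- split=> [/orP[]//|_]; rewrite e -exprM (hz 3) /s; apply/eqP; rewrite -addr_eq0 addrC S2 //.
- split=> [/orP[]//|_]; rewrite e -exprM (hz 7) (hz 2) /s; apply/eqP; rewrite -addr_eq0.
  apply/eqP; rewrite -[RHS]S2; ring.
- split=> [_|/orP[]//]; rewrite e -exprM (hz 11) (hz 6) (hz 1) /s expr1; ring.
Qed.


Lemma fibSS n : fib n.+2 = (fib n.+1 + fib n)%N.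
Proof. by []. Qed.

Lemma binet n : 2 ^+ n * (fib n)%:R * s = (1 + s) ^+ n - (1 - s) ^+ n.
Proof.
have ea : (1 + s) ^+ 2 = 2 * (1 + s) + 4.
  transitivity (s ^+ 2 + 2 * s + 1); first by ring. by rewrite s2; ring.
have eb : (1 - s) ^+ 2 = 2 * (1 - s) + 4.
  transitivity (s ^+ 2 - 2 * s + 1); first by ring. by rewrite s2; ring.
suff : forall n, 2 ^+ n * (fib n)%:R * s = (1 + s) ^+ n - (1 - s) ^+ n /\
   2 ^+ n.+1 * (fib n.+1)%:R * s = (1 + s) ^+ n.+1 - (1 - s) ^+ n.+1 by case/(_ n).
elim=> [|m [IH0 IH1]].
  by split; rewrite /= ?mulr0 ?mul0r ?expr0 ?subrr //; ring.
split=> //.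
rewrite fibSS natrD.
transitivity (2 * (2 ^+ m.+1 * (fib m.+1)%:R * s) + 4 * (2 ^+ m * (fib m)%:R * s)).
  by rewrite !exprS; ring.
rewrite IH0 IH1 !exprS; set A := (1 + s) ^+ m; set B := (1 - s) ^+ m.
apply: (@eq_trans _ _ ((1 + s) * ((1 + s) * A) - (1 - s) * ((1 - s) * B) - (s ^+ 2 - 5) * (A - B))).
  by ring.
by rewrite s2 subrr mul0r subr0.
Qed.

Lemma ar : (1 + s) ^+ r = 1 + s ^+ r.
Proof. by rewrite frobD expr1n. Qed.
Lemma br : (1 - s) ^+ r = 1 - s ^+ r.
Proof. by rewrite frobD frobN expr1n. Qed.
Lemma twor : (2 : F) ^+ r = 2.
Proof. exact: frob_nat. Qed.

Lemma binetS1 : 2 * 2 * (fib r.+1)%:R * s = (1 + s) * (1 + s ^+ r) - (1 - s) * (1 - s ^+ r).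
Proof. by rewrite -ar -br -!exprS -binet exprS twor. Qed.

Lemma binet0 : 2 * (fib r)%:R * s = (1 + s ^+ r) - (1 - s ^+ r).
Proof. by rewrite -ar -br -binet twor. Qed.

Lemma fib_pm1 : s ^+ r = s ^+ 1 -> (fib r)%:R = 1 :> F /\ (fib r.+1)%:R = 1 :> F.
Proof.
rewrite expr1 => e.
have hs := s_neq0; have h2 := two_neq0.
split.
  apply: (mulIf hs); apply: (mulfI h2); rewrite mulrA binet0 e; ring.
apply: (mulIf hs); apply: (mulfI (mulf_neq0 h2 h2)); rewrite mulrA binetS1 e; ring.
Qed.

Lemma fib_pm2 : s ^+ r = - s -> (fib r.+1)%:R = 0 :> F.
Proof.
move=> e.
have hs := s_neq0; have h2 := two_neq0.
apply: (mulIf hs); apply: (mulfI (mulf_neq0 h2 h2)); rewrite mulrA binetS1 e; ring.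
Qed.

End FieldPart.
Lemma nat1_mod (F : fieldType) r (chR : r \in [pchar F]) n :
  (n%:R : F) = 1 -> (n %% r = 1 %% r)%N.
Proof.
move=> h.
have n1 : (1 <= n)%N.
  case: n h => // /eqP; rewrite eq_sym oner_eq0 //.
apply/eqP; rewrite eqn_mod_dvd // (dvdn_pcharf chR) natrB // h subrr //.
Qed.

Lemma exists_zeta r : prime r -> r != 5%N ->
  exists F : finFieldType, exists chR : r \in [pchar F], exists z : F, z ^+ 5 = 1 /\ z != 1.
Proof.
move=> pr r5.
have [Fm chR cardF] := @pPrimePowerField r 4%N pr isT.
have d5 : (5 %| #|[set: {unit Fm}]|)%N.
  rewrite card_finField_unit cardF -subn1 -eqn_mod_dvd ?expn_gt0 ?prime_gt0 //.
  rewrite -modnXm.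
  have r0 : (r %% 5 != 0)%N.
    apply/negP => /eqP h; move: r5; rewrite eq_sym -dvdn_prime2 ?/dvdn ?h //.
  have : (r %% 5 < 5)%N by rewrite ltn_mod.
  by move: r0; case: (r %% 5)%N => [|[|[|[|[|k]]]]].
have [x _ ox] := Cauchy (isT : prime 5) d5.
exists Fm, chR, (val x); split.
  by rewrite -FinRing.Theory.val_unitX -ox expg_order.
apply/negP => /eqP h.
have : x = 1%g by apply: val_inj; rewrite h.
by move=> e; move: ox; rewrite e order1.
Qed.

Lemma fib_prime14 r : prime r -> r != 2%N -> r != 5%N ->
  (r %% 5 == 1)%N || (r %% 5 == 4)%N ->
  (fib r %% r = 1 %% r)%N /\ (fib r.+1 %% r = 1 %% r)%N.
Proof.
move=> pr r2 r5 h.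
have [F [chR [z [z5 z1]]]] := exists_zeta _ pr r5.
have [h1 _] := @sr _ _ chR _ z5 z1 r5.
have [e1 e2] := @fib_pm1 _ _ chR _ z5 z1 r2 r5 (h1 h).
by split; apply: (@nat1_mod _ _ chR).
Qed.

Lemma fib_prime23 r : prime r -> r != 2%N -> r != 5%N ->
  (r %% 5 == 2)%N || (r %% 5 == 3)%N -> (r %| fib r.+1)%N.
Proof.
move=> pr r2 r5 h.
have [F [chR [z [z5 z1]]]] := exists_zeta _ pr r5.
have [_ h2] := @sr _ _ chR _ z5 z1 r5.
by rewrite (dvdn_pcharf chR) (@fib_pm2 _ _ chR _ z5 z1 r2 r5 (h2 h)).
Qed.

From mathcomp Require Import zify.
Local Open Scope nat_scope.

Lemma fib_add m n : fib (m + n.+1) = fib m.+1 * fib n.+1 + fib m * fib n.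
Proof.
suff : forall n, fib (m + n.+1) = fib m.+1 * fib n.+1 + fib m * fib n /\
  fib (m + n.+2) = fib m.+1 * fib n.+2 + fib m * fib n.+1 by case/(_ n).
elim=> [|k [IH0 IH1]].
  by rewrite addn1 addn2 /= muln1 muln0 addn0 muln1.
split=> //.
rewrite !addnS fibSS -!addnS IH0 IH1 (fibSS k.+1).
rewrite [in RHS](fibSS k) !mulnDr; lia.
Qed.

Lemma rank_dvd p z : prime p -> is_rank_app p z -> forall n, p %| fib n -> z %| n.
Proof.
move=> pr [z0 [pz zmin]].
have [w zw] : exists w, z = w.+2.
  case: z z0 pz {zmin} => [//|[|w]] _ pz; last by exists w.
  by move: pz; rewrite /= dvdn1 => /eqP p1; move: pr; rewrite p1.
subst z => n.
elim: n {-2}n (leqnn n) => [|N IH] n hn hp.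
  by move: hn; rewrite leqn0 => /eqP ->; rewrite dvdn0.
case: (ltnP n w.+2) => hnz.
  case: n hn hp hnz => [|n] hn hp hnz; first by rewrite dvdn0.
  by move: (zmin n.+1 isT hnz); rewrite hp.
have [a ea] : exists a, n = a + w.+2 by exists (n - w.+2); rewrite subnK.
subst n.
rewrite fib_add in hp.
have : p %| fib a * fib w.+1 by move: hp; rewrite dvdn_addr // dvdn_mull.
rewrite Euclid_dvdM // (negPf (zmin w.+1 isT (ltnSn _))) orbF => ha.
rewrite dvdn_addl //; apply: IH ha; lia.
Qed.

Lemma period_mul n k c : fib_period n k -> fib_period n (c * k).
Proof.
move=> hk; elim: c => [|c IH] m; first by rewrite mul0n addn0.
by rewrite mulSn addnA addnAC hk IH.
Qed.

Lemma pisano_dvd n P k : is_pisano n P -> fib_period n k -> P %| k.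
Proof.
move=> [P0 [hP Pmin]] hk.
have hb : fib_period n (k %% P).
  move=> m; rewrite -(@period_mul n P (k %/ P) hP) -addnA [k %% P + _]addnC.
  by rewrite -divn_eq hk.
rewrite /dvdn; apply/negPn/negP => nz.
by apply: (Pmin _ _ (ltn_pmod k P0) hb); rewrite lt0n.
Qed.

Lemma period_of k n : fib k %% n = 0 -> fib k.+1 %% n = 1 %% n -> fib_period n k.
Proof.
move=> h0 h1.
suff : forall m, fib (m + k) %% n = fib m %% n /\ fib (m.+1 + k) %% n = fib m.+1 %% n
  by move=> H m; case: (H m).
elim=> [|m [IH0 IH1]]; first by rewrite add0n h0 mod0n add1n h1.
split=> //.
by rewrite !addSn fibSS -modnDm -addSn IH1 IH0 modnDm.
Qed.

Lemma prev0 a n : fib a.+1 %% n = 1 %% n -> fib a.+2 %% n = 1 %% n -> fib a %% n = 0.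
Proof.
rewrite fibSS => h1 h2.
have : (fib a.+1 + fib a == fib a.+1 + 0 %[mod n]) by rewrite addn0 h2 h1.
by rewrite eqn_modDl mod0n => /eqP.
Qed.

Lemma small_rank p z : 3 < p -> is_rank_app p z -> z <= 4 -> False.
Proof.
move=> p3 [z0 [pz _]] z4.
have hf : 0 < fib z /\ fib z <= 3.
  by case: z z0 z4 {pz} => [|[|[|[|[|]]]]].
have := dvdn_leq (proj1 hf) pz; lia.
Qed.

Lemma ar1 q : ~~ (3 %| q) -> ~~ (3 %| 2 * q + 1) -> q %% 3 = 2.
Proof. lia. Qed.
Lemma ar2 q : q %% 3 = 2 -> q %% 5 = 3 -> q = 8 %[mod 15].
Proof. lia. Qed.
Lemma ar3 q : ~~ (5 %| q) -> ~~ (5 %| 2 * q + 1) -> ~~ ((q %% 5 == 1) || (q %% 5 == 4)) -> q %% 5 = 3.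
Proof. lia. Qed.
Lemma ar4 q : q %% 5 = 1 -> ((2 * q + 1) %% 5 == 2) || ((2 * q + 1) %% 5 == 3).
Proof. lia. Qed.
Lemma ar5 q : q %% 5 = 4 -> ((2 * q + 1) %% 5 == 1) || ((2 * q + 1) %% 5 == 4).
Proof. lia. Qed.
Lemma ar6 q : 5 < q -> (2 * q + 1).+1 - 2 * q.-1 = 4.
Proof. lia. Qed.
Lemma ar7 q : 5 < q -> 2 * q - 2 * q.-1 = 2.
Proof. lia. Qed.
Lemma ar8 q : 5 < q -> 2 * q = (2 * q + 1).-1.
Proof. lia. Qed.

Lemma neqs q : 5 < q -> [/\ q != 2, q != 5, 3 != q, 5 != q & 3 != 2 * q + 1] /\
  [/\ 5 != 2 * q + 1, 2 * q + 1 != 2, 2 * q + 1 != 5 & 3 < 2 * q + 1].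
Proof. move=> h; split; split; lia. Qed.

Theorem theorem7p1 (q zq piq : nat) :
  sophie_germain q -> 5 < q ->
  is_rank_app (2 * q + 1) zq -> is_pisano q piq ->
  zq %| piq ->
  q = 8 %[mod 15].
Proof.
move=> [qp pp] q5 hz hpi hdvd.
have [[n1 n2 n3 n4 n5] [n6 n7 n8 n9]] := neqs _ q5.
have nd : forall d, prime d -> forall m, prime m -> d != m -> ~~ (d %| m).
  by move=> d pd m pm; rewrite dvdn_prime2.
have h3q : ~~ (3 %| q) by apply: nd.
have h3p : ~~ (3 %| 2 * q + 1) by apply: nd.
have h5q : ~~ (5 %| q) by apply: nd.
have h5p : ~~ (5 %| 2 * q + 1) by apply: nd.
apply: ar2; first exact: ar1.
case: (boolP ((q %% 5 == 1) || (q %% 5 == 4))) => hq; last exact: ar3.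
have [e1 e2] := fib_prime14 _ qp n1 n2 hq.
have q0 := prime_gt0 qp.
have per : fib_period q q.-1.
  apply: period_of; last by rewrite prednK.
  by apply: prev0; rewrite prednK.
have zq1 : zq %| q.-1 := dvdn_trans hdvd (pisano_dvd _ _ _ hpi per).
have pr := rank_dvd _ _ pp hz.
exfalso.
case/orP: hq => /eqP hq.
- have : zq %| (2 * q + 1).+1.
    by apply: pr; apply: fib_prime23 => //; apply: ar4.
  move=> h; have : zq %| (2 * q + 1).+1 - 2 * q.-1 by rewrite dvdn_sub // dvdn_mull.
  rewrite ar6 // => /(dvdn_leq (isT : 0 < 4)) z4.
  exact: (small_rank _ _ n9 hz z4).
- have [f1 f2] := fib_prime14 _ pp n7 n8 (ar5 _ hq).
  have : zq %| 2 * q.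
    apply: pr; rewrite /dvdn; apply/eqP.
    rewrite {1}ar8 //; apply: prev0; rewrite prednK // prime_gt0 //.
  move=> h; have : zq %| 2 * q - 2 * q.-1 by rewrite dvdn_sub // dvdn_mull.
  rewrite ar7 // => /(dvdn_leq (isT : 0 < 2)) z2.
  by apply: (small_rank _ _ n9 hz); apply: leq_trans z2 _.
Qed.
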